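(* There exist absolute constants $c_1,c_2>0$ such that for every $M\in\{0,1\}^{m\times n}$, $$c_1\operatorname{disc}^{+}(M)\leq \operatorname{pdisc}(M)\leq c_2\operatorname{disc}^{+}(M)\quad\text{and}\quad c_1\operatorname{disc}^{-}(M)\leq \operatorname{pdisc}(M)\leq c_2\operatorname{disc}^{-}(M).$$
   Context: For $M\in\{0,1\}^{m\times n}$, $|M|$ is the number of $1$ entries, $p=|M|/(mn)$, and for $X\subset[m]$, $Y\subset[n]$, $\operatorname{disc}(X,Y)=|M[X\times Y]|-p|X||Y|$, where $|M[X\times Y]|$ is the number of $1$ entries of the submatrix with rows $X$ and columns $Y$; $\operatorname{disc}^{+}(M)=\max_{X,Y}\operatorname{disc}(X,Y)$ and $\operatorname{disc}^{-}(M)=\max_{X,Y}(-\operatorname{disc}(X,Y))$. Let $N=m+n$. The symmetrization of $M$ is the symmetric matrix $A\in\mathbb{R}^{N\times N}$ with $A_{i,j+m}=A_{j+m,i}=M_{i,j}$ for $(i,j)\in[m]\times[n]$ and all other entries $0$. Let $L\in\mathbb{R}^{N\times N}$ be the adjacency matrix of the complete bipartite graph with parts $[m]$ and $[m+1,N]$ ($L_{i,j}=1$ if exactly one of $i,j$ lies in $[m]$, else $0$). For $X\in\mathbb{R}^{N\times N}$, $\operatorname{disc}(X)=\langle X,A\rangle-p\langle X,L\rangle$, where $\langle\cdot,\cdot\rangle$ is the entrywise (Frobenius) inner product, and $\operatorname{pdisc}(M)=\max\{\operatorname{disc}(X): X \text{ symmetric positive semidefinite},\ X_{i,i}\leq 1\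 \forall i\in[N]\}$. *)

(* Defs.v *)
From HB Require Import structures.
From mathcomp Require Import all_boot all_order all_algebra.
From mathcomp Require Import boolp classical_sets reals.
Set Implicit Arguments. Unset Strict Implicit. Unset Printing Implicit Defensive.
Import Order.TTheory GRing.Theory Num.Theory.
Local Open Scope ring_scope.
Local Open Scope classical_set_scope.

Section Disc.
Variable R : realType.

Definition ones (m n : nat) (M : 'M[bool]_(m, n)) : R :=
  \sum_(i < m) \sum_(j < n) (M i j)%:R.

Definition density (m n : nat) (M : 'M[bool]_(m, n)) : R :=
  ones M / (m * n)%:R.

Definition disc (m n : nat) (M : 'M[bool]_(m, n))
    (X : {set 'I_m}) (Y : {set 'I_n}) : R :=
  \sum_(i in X) \sum_(j in Y) (M i j)%:R
  - density M * #|X|%:R * #|Y|%:R.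

(* disc^+ (M) = max_{X,Y} disc(X,Y).  Starting the iterated max at 0 is
   harmless since disc(emptyset, emptyset) = 0 is among the values. *)
Definition discp (m n : nat) (M : 'M[bool]_(m, n)) : R :=
  \big[Num.max/0]_(X : {set 'I_m}) \big[Num.max/0]_(Y : {set 'I_n}) disc M X Y.

Definition discm (m n : nat) (M : 'M[bool]_(m, n)) : R :=
  \big[Num.max/0]_(X : {set 'I_m}) \big[Num.max/0]_(Y : {set 'I_n}) (- disc M X Y).

(* symmetrization A of M, indices 'I_(m+n): rows [m] first, then columns *)
Definition symmetrization (m n : nat) (M : 'M[bool]_(m, n)) : 'M[R]_(m + n) :=
  \matrix_(i, j)
    match split i, split j with
    | inl a, inr b => (M a b)%:R
    | inr b, inl a => (M a b)%:R
    | _, _ => 0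
    end.

Definition bipL (m n : nat) : 'M[R]_(m + n) :=
  \matrix_(i, j)
    match split i, split j with
    | inl _, inr _ => 1
    | inr _, inl _ => 1
    | _, _ => 0
    end.

Definition frob (N : nat) (X Y : 'M[R]_N) : R :=
  \sum_(i < N) \sum_(j < N) X i j * Y i j.

Definition discX (m n : nat) (M : 'M[bool]_(m, n)) (X : 'M[R]_(m + n)) : R :=
  frob X (symmetrization M) - density M * frob X (bipL m n).

Definition psd (N : nat) (X : 'M[R]_N) : Prop :=
  X^T = X /\ forall v : 'cV[R]_N, 0 <= (v^T *m X *m v) 0 0.

(* pdisc(M) = max { disc(X) : X symmetric PSD, X_ii <= 1 } (as a sup; the
   feasible set is compact and nonempty, so the sup is attained). *)
Definition pdisc (m n : nat) (M : 'M[bool]_(m, n)) : R :=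
  sup [set discX M X | X in [set X : 'M[R]_(m + n) |
                              psd X /\ forall i, X i i <= 1]].

End Disc.

(* Main.v *)
Require Import Defs.
From HB Require Import structures.
From mathcomp Require Import all_boot all_order all_algebra.
From mathcomp Require Import boolp classical_sets reals.
From mathcomp Require Import ring lra zify.
Import Order.TTheory GRing.Theory Num.Theory.
Local Open Scope ring_scope.



Section G. Variable R : realType.
Definition sg (b:bool) : R := if b then 1 else -1.
Fixpoint gs (u : nat -> R) (w : seq bool) : R :=
  match w with [::] => 0 | b :: w' => u 0%N * sg b + gs (fun k => u k.+1) w' end.
Fixpoint signs (K : nat) : seq (seq bool) :=
  if K is K'.+1 then [seq true :: w | w <- signs K'] ++ [seq false :: w | w <- signs K']
  else [:: [::]].

Lemma sum_signsS K (f : seq bool -> R) :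
  \sum_(w <- signs K.+1) f w =
  \sum_(w <- signs K) f (true::w) + \sum_(w <- signs K) f (false::w).
Proof. by rewrite /= big_cat !big_map. Qed.

Lemma size_signs K : size (signs K) = (2^K)%N.
Proof. elim: K => //= K IH; rewrite size_cat !size_map IH expnS; lia. Qed.

Lemma sum_signs1 K : \sum_(w <- signs K) (1:R) = (2^K)%:R.
Proof. elim: K => [|K IH]; first by rewrite big_seq1. by rewrite sum_signsS IH expnS natrM; ring. Qed.

Lemma F1 K u v : \sum_(w <- signs K) gs u w * gs v w = (2^K)%:R * \sum_(k < K) u k * v k.
Proof.
elim: K u v => [|K IH] u v; first by rewrite big_ord0 big_seq1 /= !mulr0.
rewrite sum_signsS /= -big_split /=.
under eq_bigr do rewrite /sg /=.
have -> : \sum_(i <- signs K) ((u 0%N * 1 + gs (fun k : nat => u k.+1) i) * (v 0%N * 1 + gs (fun k : nat => v k.+1) i) +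
   (u 0%N * -1 + gs (fun k : nat => u k.+1) i) * (v 0%N * -1 + gs (fun k : nat => v k.+1) i))
  = \sum_(i <- signs K) (2 * (u 0%N * v 0%N) * 1 + 2 * (gs (fun k : nat => u k.+1) i * gs (fun k : nat => v k.+1) i)).
  by apply: eq_bigr => i _; ring.
rewrite big_split /= -!mulr_sumr sum_signs1 IH big_ord_recl expnS natrM.
ring.
Qed.

Lemma F2 K u : \sum_(w <- signs K) gs u w ^+ 4 <= 3 * (2^K)%:R * (\sum_(k < K) u k ^+ 2) ^+ 2.
Proof.
elim: K u => [|K IH] u; first by rewrite big_seq1 big_ord0 /= !expr0n /= mulr0.
rewrite sum_signsS /= -big_split /=.
set a := fun i => gs (fun k : nat => u k.+1) i.
have -> : \sum_(i <- signs K) ((u 0%N * sg true + a i) ^+ 4 + (u 0%N * sg false + a i) ^+ 4)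
  = \sum_(i <- signs K) (2 * a i ^+ 4 + (12 * u 0%N ^+ 2) * (a i * a i) + (2 * u 0%N ^+ 4) * 1).
  by apply: eq_bigr => i _; rewrite /sg /=; ring.
rewrite !big_split /= -!mulr_sumr sum_signs1 F1 big_ord_recl expnS natrM.
have := IH (fun k => u k.+1).
set s := \sum_(i < K) _. rewrite /a.
set A := \sum_(i <- signs K) _.
set N := (2^K)%:R; move=> H.
have s0 : 0 <= s by rewrite /s sumr_ge0 // => i _; rewrite sqr_ge0.
have N0 : 0 <= N by rewrite /N ler0n.
have : 0 <= N * u 0%N ^+ 4 by rewrite mulr_ge0 // exprn_even_ge0.
simpl nat_of_ord; nra.
Qed.


Definition cl (x : R) : R := if x < -8 then -8 else if 8 < x then 8 else x.
Lemma cl_bnd x : -8 <= cl x /\ cl x <= 8.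
Proof. rewrite /cl; case: (ltrP x (-8)) => H1; case: (ltrP 8 x) => H2; lra. Qed.
Lemma cl_sq x : cl x ^+ 2 <= x ^+ 2.
Proof. rewrite /cl; case: (ltrP x (-8)) => H1; case: (ltrP 8 x) => H2; nra. Qed.
Lemma tl_sq x : 64 * (x - cl x) ^+ 2 <= x ^+ 4.
Proof. rewrite /cl; case: (ltrP x (-8)) => H1; case: (ltrP 8 x) => H2; nra. Qed.

Lemma sum_abs (I : finType) (f : I -> R) :
  \sum_i `|f i| = \sum_(i in [set i | 0 <= f i]) f i - \sum_(i in ~: [set i | 0 <= f i]) f i.
Proof.
rewrite (bigID (fun i => i \in [set i | 0 <= f i])) /=.
congr (_ + _).
  apply: eq_big => i; first by rewrite inE.
  by rewrite inE => H; rewrite ger0_norm.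
rewrite -sumrN; apply: eq_big => i; first by rewrite !inE.
by rewrite inE => H; rewrite ltr0_norm // ltNge.
Qed.

Lemma mul_le_abs (I : finType) (x f : I -> R) (T : R) :
  (forall i, -T <= x i /\ x i <= T) -> \sum_i x i * f i <= T * \sum_i `|f i|.
Proof.
move=> H; rewrite mulr_sumr; apply: ler_sum => i _.
have [H1 H2] := H i.
case: (lerP 0 (f i)) => Hf; [rewrite ger0_norm // | rewrite ltr0_norm //]; nra.
Qed.


Section Bil.
Variables (m n : nat) (B : 'I_m -> 'I_n -> R) (D : R).
Hypothesis HD : forall (P : {set 'I_m}) (Q : {set 'I_n}),
  `| \sum_(a in P) \sum_(b in Q) B a b | <= D.

Lemma col_bnd (P : {set 'I_m}) : \sum_b `| \sum_(a in P) B a b | <= 2 * D.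
Proof.
rewrite sum_abs.
set Q := [set _ | _].
have E : forall Q : {set 'I_n}, \sum_(b in Q) \sum_(a in P) B a b = \sum_(a in P) \sum_(b in Q) B a b.
  by move=> Q'; rewrite exchange_big.
have := HD P Q; have := HD P (~: Q); rewrite -!E !ler_norml; lra.
Qed.

Lemma bil (x : 'I_m -> R) (y : 'I_n -> R) (T : R) : 0 <= T ->
  (forall a, -T <= x a /\ x a <= T) -> (forall b, -T <= y b /\ y b <= T) ->
  \sum_a \sum_b B a b * (x a * y b) <= 4 * T ^+ 2 * D.
Proof.
move=> T0 Hx Hy.
have -> : \sum_a \sum_b B a b * (x a * y b) = \sum_a x a * (\sum_b B a b * y b).
  apply: eq_bigr => a _; rewrite mulr_sumr; apply: eq_bigr => b _; ring.
apply: le_trans (mul_le_abs _ _ _ _ Hx) _.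
rewrite sum_abs.
set P := [set _ | _].
set r := fun a => \sum_b B a b * y b.
have h1 : \sum_(a in P) r a <= 2 * T * D.
  have -> : \sum_(a in P) r a = \sum_b y b * (\sum_(a in P) B a b).
    rewrite /r exchange_big /=; apply: eq_bigr => b _; rewrite mulr_sumr.
    by apply: eq_bigr => a _; ring.
  apply: le_trans (mul_le_abs _ _ _ _ Hy) _.
  have := col_bnd P; move=> hc; nra.
have h2 : - \sum_(a in ~: P) r a <= 2 * T * D.
  have -> : - \sum_(a in ~: P) r a = \sum_b y b * (- \sum_(a in ~: P) B a b).
    rewrite /r exchange_big /= -sumrN; apply: eq_bigr => b _.
    rewrite mulrN mulr_sumr; congr (- _); apply: eq_bigr => a _; ring.
  apply: le_trans (mul_le_abs _ _ _ _ Hy) _.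
  under eq_bigr do rewrite normrN.
  have := col_bnd (~: P); move=> hc; nra.
have : T * (\sum_(a in P) r a - \sum_(a in ~: P) r a) <= T * (4 * T * D).
  by apply: ler_wpM2l => //; lra.
rewrite /r; nra.
Qed.
End Bil.


Lemma sum_nth_signs K (f : seq bool -> R) :
  \sum_(t < 2^K) f (nth [::] (signs K) t) = \sum_(w <- signs K) f w.
Proof. by rewrite (big_nth [::]) size_signs big_mkord. Qed.

Lemma sum_const_signs K (c : R) : \sum_(w <- signs K) c = c * (2^K)%:R.
Proof. by rewrite -sum_signs1 mulr_sumr; apply: eq_bigr => w _; rewrite mulr1. Qed.

Section Groth.
Variables (m n : nat) (B : 'I_m -> 'I_n -> R) (D : R).
Hypothesis HD : forall (P : {set 'I_m}) (Q : {set 'I_n}),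
  `| \sum_(a in P) \sum_(b in Q) B a b | <= D.

Definition gval K (u : 'I_m -> nat -> R) (w : 'I_n -> nat -> R) :=
  \sum_a \sum_b B a b * \sum_(k < K) u a k * w b k.
Definition gok K (u : 'I_m -> nat -> R) (w : 'I_n -> nat -> R) :=
  (forall a, \sum_(k < K) u a k ^+ 2 <= 1) /\ (forall b, \sum_(k < K) w b k ^+ 2 <= 1).
Definition Sset : set R := fun x => exists K u w, gok K u w /\ x = gval K u w.

Lemma inner_bnd K (u w : nat -> R) : \sum_(k < K) u k ^+ 2 <= 1 -> \sum_(k < K) w k ^+ 2 <= 1 ->
  -1 <= \sum_(k < K) u k * w k <= 1.
Proof.
move=> Hu Hw.
have H1 : 2 * \sum_(k < K) u k * w k <= \sum_(k < K) u k ^+ 2 + \sum_(k < K) w k ^+ 2.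
  rewrite -big_split /= mulr_sumr; apply: ler_sum => k _ /=; have := sqr_ge0 (u k - w k); nra.
have H2 : - (2 * \sum_(k < K) u k * w k) <= \sum_(k < K) u k ^+ 2 + \sum_(k < K) w k ^+ 2.
  rewrite -big_split /= mulr_sumr -sumrN; apply: ler_sum => k _; have := sqr_ge0 (u k + w k); nra.
apply/andP; split; lra.
Qed.

Lemma Sset_has_sup : has_sup Sset.
Proof.
split.
  exists 0; exists 0%N, (fun _ _ => 0), (fun _ _ => 0); split.
    by split => ?; rewrite big_ord0.
  by rewrite /gval big1 // => a _; rewrite big1 // => b _; rewrite big_ord0 mulr0.
exists (\sum_a \sum_b `|B a b|) => x [K [u [w [[Hu Hw] ->]]]].
apply: ler_sum => a _; apply: ler_sum => b _.
have /andP[h1 h2] := inner_bnd _ _ _ (Hu a) (Hw b).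
case: (lerP 0 (B a b)) => hB; [rewrite ger0_norm // | rewrite ltr0_norm //]; nra.
Qed.

Lemma embed K (F : 'I_m -> seq bool -> R) (G : 'I_n -> seq bool -> R) :
  (forall a, \sum_(w <- signs K) F a w ^+ 2 <= (2^K)%:R) ->
  (forall b, \sum_(w <- signs K) G b w ^+ 2 <= (2^K)%:R) ->
  \sum_a \sum_b B a b * ((2^K)%:R^-1 * \sum_(w <- signs K) F a w * G b w) <= sup Sset.
Proof.
move=> HF HG.
set N : R := (2^K)%:R.
have N0 : 0 < N by rewrite /N ltr0n expn_gt0.
set r := Num.sqrt (N^-1).
have r2 : r * r = N^-1 by rewrite -expr2 sqr_sqrtr // invr_ge0 ltW.
apply: sup_upper_bound; first exact: Sset_has_sup.
exists (2^K)%N, (fun a t => r * F a (nth [::] (signs K) t)),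
  (fun b t => r * G b (nth [::] (signs K) t)); split.
  split.
    move=> a; rewrite (eq_bigr (fun t : 'I_(2^K) => N^-1 * F a (nth [::] (signs K) t) ^+ 2)).
      rewrite -mulr_sumr (sum_nth_signs K (fun w => F a w ^+ 2)) ler_pdivrMl // mulr1; exact: HF.
    by move=> t _; rewrite exprMn expr2 r2.
  move=> b; rewrite (eq_bigr (fun t : 'I_(2^K) => N^-1 * G b (nth [::] (signs K) t) ^+ 2)).
    rewrite -mulr_sumr (sum_nth_signs K (fun w => G b w ^+ 2)) ler_pdivrMl // mulr1; exact: HG.
  by move=> t _; rewrite exprMn expr2 r2.
rewrite /gval; apply: eq_bigr => a _; apply: eq_bigr => b _; congr (_ * _).
rewrite (eq_bigr (fun t : 'I_(2^K) => N^-1 * (F a (nth [::] (signs K) t) * G b (nth [::] (signs K) t)))).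
  by rewrite -mulr_sumr (sum_nth_signs K (fun w => F a w * G b w)).
by move=> t _; rewrite -r2; ring.
Qed.


Definition tl (x : R) := x - cl x.

Lemma main_step x : Sset x -> x <= 256 * D + sup Sset / 2.
Proof.
move=> [K [u [w [[Hu Hw] ->]]]].
set N : R := (2^K)%:R.
have N0 : 0 < N by rewrite /N ltr0n expn_gt0.
set g := fun a ws => gs (u a) ws.
set h := fun b ws => gs (w b) ws.
have E : forall a b, B a b * \sum_(k < K) u a k * w b k =
   B a b * (N^-1 * \sum_(ws <- signs K) cl (g a ws) * cl (h b ws))
 + (1/4) * (B a b * (N^-1 * \sum_(ws <- signs K) (4 * tl (g a ws)) * h b ws))
 + (1/4) * (B a b * (N^-1 * \sum_(ws <- signs K) cl (g a ws) * (4 * tl (h b ws)))).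
  move=> a b.
  have -> : \sum_(k < K) u a k * w b k = N^-1 * \sum_(ws <- signs K) g a ws * h b ws.
    by rewrite /g /h F1 mulrA mulVf ?mul1r // gt_eqF.
  have -> : \sum_(ws <- signs K) g a ws * h b ws =
     \sum_(ws <- signs K) cl (g a ws) * cl (h b ws)
   + \sum_(ws <- signs K) (4 * tl (g a ws)) * h b ws / 4
   + \sum_(ws <- signs K) cl (g a ws) * (4 * tl (h b ws)) / 4.
    rewrite -!big_split /=; apply: eq_bigr => ws _; by rewrite /tl; field.
  rewrite -!mulr_suml; field; by rewrite pnatr_eq0 expn_eq0.
have -> : gval K u w =
    \sum_a \sum_b B a b * (N^-1 * \sum_(ws <- signs K) cl (g a ws) * cl (h b ws))
  + (1/4) * \sum_a \sum_b (B a b * (N^-1 * \sum_(ws <- signs K) (4 * tl (g a ws)) * h b ws))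
  + (1/4) * \sum_a \sum_b (B a b * (N^-1 * \sum_(ws <- signs K) cl (g a ws) * (4 * tl (h b ws)))).
  rewrite !mulr_sumr -!big_split /=; apply: eq_bigr => a _.
  rewrite !mulr_sumr -!big_split /=; apply: eq_bigr => b _; exact: E.
have hg2 : forall a, \sum_(ws <- signs K) g a ws ^+ 2 <= N.
  move=> a; rewrite (eq_bigr (fun ws => g a ws * g a ws)); last by move=> ws _; rewrite expr2.
  rewrite /g F1 -/N; have := Hu a; under eq_bigr do rewrite expr2.
  move=> H; nra.
have hh2 : forall b, \sum_(ws <- signs K) h b ws ^+ 2 <= N.
  move=> b; rewrite (eq_bigr (fun ws => h b ws * h b ws)); last by move=> ws _; rewrite expr2.
  rewrite /h F1 -/N; have := Hw b; under eq_bigr do rewrite expr2.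
  move=> H; nra.
have tl4 : forall (v : nat -> R), \sum_(k < K) v k ^+ 2 <= 1 ->
    \sum_(ws <- signs K) (4 * tl (gs v ws)) ^+ 2 <= N.
  move=> v Hv.
  have h1 : \sum_(ws <- signs K) (4 * tl (gs v ws)) ^+ 2 <= \sum_(ws <- signs K) (gs v ws ^+ 4 / 4).
    apply: ler_sum => ws _; have := tl_sq (gs v ws); rewrite /tl; lra.
  apply: le_trans h1 _; rewrite -mulr_suml.
  have := F2 K v; rewrite -/N => H.
  have s0 : 0 <= \sum_(k < K) v k ^+ 2 by apply: sumr_ge0 => k _; exact: sqr_ge0.
  have : (\sum_(k < K) v k ^+ 2) ^+ 2 <= 1.
    nra.
  move=> H2; nra.
have T1 : \sum_a \sum_b B a b * (N^-1 * \sum_(ws <- signs K) cl (g a ws) * cl (h b ws)) <= 256 * D.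
  have -> : \sum_a \sum_b B a b * (N^-1 * \sum_(ws <- signs K) cl (g a ws) * cl (h b ws))
     = N^-1 * \sum_(ws <- signs K) \sum_a \sum_b B a b * (cl (g a ws) * cl (h b ws)).
    rewrite [X in _ = _ * X]exchange_big /= [RHS]mulr_sumr; apply: eq_bigr => a _.
    rewrite [X in _ = _ * X]exchange_big /= [RHS]mulr_sumr; apply: eq_bigr => b _.
    rewrite mulr_sumr mulr_sumr mulr_sumr; apply: eq_bigr => ws _; ring.
  have : \sum_(ws <- signs K) \sum_a \sum_b B a b * (cl (g a ws) * cl (h b ws)) <= \sum_(ws <- signs K) (256 * D).
    apply: ler_sum => ws _.
    have := @bil _ _ _ _ HD (fun a => cl (g a ws)) (fun b => cl (h b ws)) 8.
    move=> H; apply: le_trans (H _ _ _) _ => //.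
    - by move=> a; exact: cl_bnd.
    - by move=> b; exact: cl_bnd.
    - by rewrite le_eqVlt; apply/orP; left; apply/eqP; ring.
  rewrite sum_const_signs -/N => H.
  rewrite -(ler_pM2l N0) mulrA mulfV ?gt_eqF // mul1r mulrC; exact: H.
have T2 := embed K (fun a ws => 4 * tl (g a ws)) h (fun a => tl4 _ (Hu a)) hh2.
have T3 := embed K (fun a ws => cl (g a ws)) (fun b ws => 4 * tl (h b ws)) ^~ (fun b => tl4 _ (Hw b)).
have T3' : forall a, \sum_(ws <- signs K) cl (g a ws) ^+ 2 <= N.
  move=> a; apply: le_trans (hg2 a); apply: ler_sum => ws _; exact: cl_sq.
have := T3 T3'; rewrite -/N /= => {}T3.
move: T2; rewrite -/N /= => T2.
lra.
Qed.

Lemma groth : sup Sset <= 512 * D.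
Proof.
have H : sup Sset <= 256 * D + sup Sset / 2.
  apply: ge_sup; first exact: (proj1 Sset_has_sup).
  move=> x Sx; exact: main_step.
lra.
Qed.

End Groth.
End G.



Section C. Variable R : realType.
Variables (m n : nat) (M : 'M[bool]_(m, n)).

Lemma sum_setC (I : finType) (A : {set I}) (f : I -> R) :
  \sum_(i in A) f i + \sum_(i in ~: A) f i = \sum_i f i.
Proof.
rewrite [RHS](bigID (mem A)) /=; congr (_ + _).
by apply: eq_bigl => i; rewrite !inE.
Qed.

Lemma ones_dens : ones R M - density R M * m%:R * n%:R = 0.
Proof.
rewrite /density.
have [->|mn0] := eqVneq (ones R M) 0; first by rewrite !mul0r subr0.
have : (m * n)%:R != 0 :> R.
  rewrite pnatr_eq0 muln_eq0; apply/negP => /orP [] /eqP e; move: mn0; rewrite /ones.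
    by rewrite big1 ?eqxx // => -[i hi]; exfalso; move: hi; rewrite e.
  by rewrite big1 ?eqxx // => i _; rewrite big1 // => -[j hj]; exfalso; move: hj; rewrite e.
rewrite natrM => H; field.
by move: H; rewrite mulf_eq0 negb_or => /andP[-> ->].
Qed.

Lemma disc4 (P : {set 'I_m}) (Q : {set 'I_n}) :
  disc R M P Q + disc R M P (~: Q) + disc R M (~: P) Q + disc R M (~: P) (~: Q) = 0.
Proof.
rewrite /disc.
have hQ : forall a, \sum_(j in Q) ((M a j)%:R : R) + \sum_(j in ~: Q) (M a j)%:R = \sum_j (M a j)%:R.
  by move=> a; rewrite sum_setC.
have e1 : \sum_(i in P) \sum_(j in Q) ((M i j)%:R : R) + \sum_(i in P) \sum_(j in ~: Q) (M i j)%:R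
   + \sum_(i in ~: P) \sum_(j in Q) (M i j)%:R + \sum_(i in ~: P) \sum_(j in ~: Q) (M i j)%:R = ones R M.
  rewrite /ones; under [RHS]eq_bigr do rewrite -hQ.
  rewrite big_split /= -[\sum_i \sum_(j in Q) _](sum_setC _ P) -[\sum_i \sum_(j in ~: Q) _](sum_setC _ P).
  lra.
have h : ones R M - density R M * (#|P| + #|~: P|)%:R * (#|Q| + #|~: Q|)%:R = 0.
  by rewrite !cardsC !card_ord; exact: ones_dens.
rewrite !natrD in h.
set p := density R M in h *.
lra.
Qed.

Lemma le_discp P Q : disc R M P Q <= discp R M.
Proof. rewrite /discp; apply: le_trans (le_bigmax _ _ P); exact: (le_bigmax _ _ Q). Qed.
Lemma le_discm P Q : - disc R M P Q <= discm R M.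
Proof. rewrite /discm; apply: le_trans (le_bigmax _ _ P); exact: (le_bigmax _ _ Q). Qed.
Lemma discp_ge0 : 0 <= discp R M.
Proof. exact: bigmax_ge_id. Qed.
Lemma discm_ge0 : 0 <= discm R M.
Proof. exact: bigmax_ge_id. Qed.
Lemma abs_disc_p P Q : `| disc R M P Q | <= 3 * discp R M.
Proof.
have := disc4 P Q; have := le_discp P Q; have := le_discp P (~: Q); have := le_discp (~: P) Q;
have := le_discp (~: P) (~: Q); have := discp_ge0.
rewrite ler_norml; lra.
Qed.
Lemma abs_disc_m P Q : `| disc R M P Q | <= 3 * discm R M.
Proof.
have := disc4 P Q; have := le_discm P Q; have := le_discm P (~: Q); have := le_discm (~: P) Q;
have := le_discm (~: P) (~: Q); have := discm_ge0.
rewrite ler_norml; lra.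
Qed.
End C.



Section Gram. Variable R : realType.
Definition qf N (Z : nat -> nat -> R) (v : nat -> R) :=
  \sum_(i < N) \sum_(j < N) v i * Z i j * v j.

Lemma qf_recl N Z v : qf N.+1 Z v =
  v 0%N * Z 0%N 0%N * v 0%N + v 0%N * \sum_(j < N) Z 0%N j.+1 * v j.+1
  + \sum_(i < N) v i.+1 * Z i.+1 0%N * v 0%N + qf N (fun i j => Z i.+1 j.+1) (fun i => v i.+1).
Proof.
rewrite /qf big_ord_recl big_ord_recl /=.
under [X in _ + X = _]eq_bigr do rewrite big_ord_recl.
rewrite big_split /= mulr_sumr.
have -> : \sum_(i < N) v 0%N * Z 0%N (bump 0 i) * v (bump 0 i) = \sum_(j < N) v 0%N * (Z 0%N j.+1 * v j.+1).
  by apply: eq_bigr => i _; rewrite mulrA.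
by rewrite !addrA.
Qed.

Lemma sum_sq N (f : nat -> R) : \sum_(i < N) \sum_(j < N) f i * f j = (\sum_(i < N) f i) ^+ 2.
Proof. by rewrite expr2 mulr_suml; apply: eq_bigr => i _; rewrite mulr_sumr. Qed.

Lemma qstep N Z (Hs : forall i j, Z i j = Z j i) (v : nat -> R) (t : R) :
  qf N.+1 Z (fun i => if i is i'.+1 then v i' else t) =
  Z 0%N 0%N * t ^+ 2 + 2 * t * (\sum_(j < N) Z 0%N j.+1 * v j) + qf N (fun i j => Z i.+1 j.+1) v.
Proof.
rewrite qf_recl /=.
have -> : \sum_(i < N) v i * Z i.+1 0%N * t = t * \sum_(j < N) Z 0%N j.+1 * v j.
  rewrite mulr_sumr; apply: eq_bigr => i _; rewrite Hs; ring.
ring.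
Qed.

Lemma gram N : forall Z : nat -> nat -> R, (forall i j, Z i j = Z j i) -> (forall v, 0 <= qf N Z v) ->
  exists z : nat -> nat -> R, forall i j, (i < N)%N -> (j < N)%N -> Z i j = \sum_(k < N) z i k * z j k.
Proof.
elim: N => [|N IH] Z Hs Hp.
  by exists (fun _ _ => 0) => i j.
set c := Z 0%N 0%N.
set Zpp := fun i j => Z i.+1 j.+1.
set b := fun v : nat -> R => \sum_(j < N) Z 0%N j.+1 * v j.
have Hq : forall v t, 0 <= c * t ^+ 2 + 2 * t * b v + qf N Zpp v.
  move=> v t; rewrite /c /b /Zpp -qstep //; exact: Hp.
have c0 : 0 <= c.
  have := Hq (fun _ => 0) 1.
  rewrite /b /qf.
  have e1 : \sum_(j < N) Z 0%N j.+1 * 0 = 0 by rewrite big1 // => j _; rewrite mulr0.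
  have e2 : \sum_(i < N) \sum_(j < N) 0 * Zpp i j * 0 = 0.
    by rewrite big1 // => i _; rewrite big1 // => j _; rewrite mulr0.
  rewrite e1 e2; lra.
set a := fun i => if 0 < c then Z i 0%N / Num.sqrt c else 0.
set Z' := fun i j => Zpp i j - a i.+1 * a j.+1.
have ba : forall v : nat -> R, \sum_(i < N) a i.+1 * v i = if 0 < c then b v / Num.sqrt c else 0.
  move=> v; rewrite /a; case: ifP => cp; last by rewrite big1 // => i _; rewrite mul0r.
  rewrite /b mulr_suml; apply: eq_bigr => i _; rewrite Hs; field.
  by rewrite gt_eqF // sqrtr_gt0.
have qZ' : forall v : nat -> R, qf N Z' v = qf N Zpp v - (\sum_(i < N) a i.+1 * v i) ^+ 2.
  move=> v; rewrite -(sum_sq N (fun i => a i.+1 * v i)) /qf -sumrB; apply: eq_bigr => i _; rewrite -sumrB.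
  apply: eq_bigr => j _; rewrite /Z'; ring.
have [z' Hz'] : exists z' : nat -> nat -> R, forall i j, (i < N)%N -> (j < N)%N -> Z' i j = \sum_(k < N) z' i k * z' j k.
  apply: IH; first by move=> i j; rewrite /Z' /Zpp Hs; ring.
  move=> v; rewrite qZ' ba; case: ifP => cp.
    have := Hq v (- b v / c).
    have sc := sqr_sqrtr c0.
    have sp : 0 < Num.sqrt c by rewrite sqrtr_gt0.
    have e : c * (- b v / c) ^+ 2 + 2 * (- b v / c) * b v = - (b v ^+ 2 / c).
      by field; rewrite gt_eqF.
    rewrite e expr_div_n sc; lra.
  rewrite expr0n /= subr0; have := Hq v 0; lra.
have zr : c = 0 -> forall j, (j < N)%N -> Z 0%N j.+1 = 0.
  move=> cz j hj.
  have bz : forall v, b v = 0.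
    move=> v; apply/eqP; apply/negPn/negP => Bn.
    have := Hq v (- (qf N Zpp v + 1) / (2 * b v)).
    rewrite cz mul0r add0r.
    have -> : 2 * (- (qf N Zpp v + 1) / (2 * b v)) * b v = - (qf N Zpp v + 1).
      by field; rewrite Bn.
    lra.
  have := bz (fun k => (k == j)%:R); rewrite /b (bigD1 (Ordinal hj)) //= eqxx mulr1.
  rewrite big1 ?addr0 // => k hk; rewrite (_ : (k == j :> nat) = false) ?mulr0 //.
  apply/negbTE; move: hk; apply: contra => /eqP e; apply/eqP; exact: val_inj.
have sc := sqr_sqrtr c0.
have sc' : Num.sqrt c * Num.sqrt c = c by rewrite -expr2.
exists (fun i k => match k with 0%N => a i | k'.+1 => if i is i'.+1 then z' i' k' else 0 end).
move=> i j hi hj; rewrite big_ord_recl /=.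
case: i hi => [|i] hi; case: j hj => [|j] hj.
- rewrite big1 ?addr0 => [|k _]; last by rewrite mul0r.
  rewrite /a -/c; case: ifP => cp.
    by rewrite mulf_div sc'; field; rewrite gt_eqF.
  by rewrite mul0r; apply/eqP; rewrite eq_le c0 andbT leNgt cp.
- rewrite big1 ?addr0 => [|k _]; last by rewrite mul0r.
  rewrite /a -/c; case: ifP => cp.
    by rewrite mulf_div sc' Hs; field; rewrite gt_eqF.
  by rewrite mul0r; apply: zr => //; apply/eqP; rewrite eq_le c0 andbT leNgt cp.
- rewrite big1 ?addr0 => [|k _]; last by rewrite mulr0.
  rewrite /a -/c; case: ifP => cp.
    by rewrite mulf_div sc' Hs; field; rewrite gt_eqF.
  by rewrite mul0r Hs; apply: zr => //; apply/eqP; rewrite eq_le c0 andbT leNgt cp.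
- rewrite -Hz' // /Z' /Zpp; ring.
Qed.
End Gram.



Lemma split_l m n (a : 'I_m) : split (lshift n a) = inl a.
Proof. exact: (unsplitK (inl _ a)). Qed.
Lemma split_r m n (b : 'I_n) : split (rshift m b) = inr b.
Proof. exact: (unsplitK (inr _ b)). Qed.

Section F. Variable R : realType.
Variables (m n : nat) (M : 'M[bool]_(m, n)).

Lemma sum4 (F : 'I_(m + n) -> 'I_(m + n) -> R) :
  \sum_i \sum_j F i j =
    \sum_a \sum_(a' < m) F (lshift n a) (lshift n a')
  + \sum_a \sum_b F (lshift n a) (rshift m b)
  + \sum_b \sum_a F (rshift m b) (lshift n a)
  + \sum_b \sum_(b' < n) F (rshift m b) (rshift m b').
Proof.
rewrite big_split_ord /=.
under eq_bigr do rewrite big_split_ord /=.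
under [X in _ + X]eq_bigr do rewrite big_split_ord /=.
by rewrite !big_split /= !addrA.
Qed.

Lemma frob_block (X Y : 'M[R]_(m + n)) (g : 'I_m -> 'I_n -> R) :
  (forall i j, X j i = X i j) ->
  (forall a a', Y (lshift n a) (lshift n a') = 0) ->
  (forall b b', Y (rshift m b) (rshift m b') = 0) ->
  (forall a b, Y (lshift n a) (rshift m b) = g a b) ->
  (forall a b, Y (rshift m b) (lshift n a) = g a b) ->
  frob X Y = 2 * \sum_a \sum_b X (lshift n a) (rshift m b) * g a b.
Proof.
move=> Xs H1 H2 H3 H4; rewrite /frob sum4.
have e1 : \sum_a \sum_(a' < m) X (lshift n a) (lshift n a') * Y (lshift n a) (lshift n a') = 0.
  by rewrite big1 // => a _; rewrite big1 // => a' _; rewrite H1 mulr0.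
have e4 : \sum_b \sum_(b' < n) X (rshift m b) (rshift m b') * Y (rshift m b) (rshift m b') = 0.
  by rewrite big1 // => a _; rewrite big1 // => a' _; rewrite H2 mulr0.
have e2 : \sum_a \sum_b X (lshift n a) (rshift m b) * Y (lshift n a) (rshift m b)
  = \sum_a \sum_b X (lshift n a) (rshift m b) * g a b.
  by apply: eq_bigr => a _; apply: eq_bigr => b _; rewrite H3.
have e3 : \sum_b \sum_a X (rshift m b) (lshift n a) * Y (rshift m b) (lshift n a)
  = \sum_a \sum_b X (lshift n a) (rshift m b) * g a b.
  by rewrite exchange_big; apply: eq_bigr => a _; apply: eq_bigr => b _; rewrite H4 Xs.
rewrite e1 e2 e3 e4 add0r addr0; ring.
Qed.

Lemma discX_sym (X : 'M[R]_(m + n)) : X^T = X ->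
  discX M X = 2 * \sum_a \sum_b ((M a b)%:R - density R M) * X (lshift n a) (rshift m b).
Proof.
move=> HT.
have Xs : forall i j, X j i = X i j by move=> i j; rewrite -[in LHS]HT mxE.
have eA : frob X (symmetrization R M) = 2 * \sum_a \sum_b X (lshift n a) (rshift m b) * (M a b)%:R.
  apply: frob_block => //.
  - by move=> a b; rewrite mxE split_l split_l.
  - by move=> a b; rewrite mxE split_r split_r.
  - by move=> a b; rewrite mxE split_l split_r.
  - by move=> a b; rewrite mxE split_r split_l.
have eL : frob X (bipL R m n) = 2 * \sum_a \sum_b X (lshift n a) (rshift m b) * 1.
  apply: frob_block => //.
  - by move=> a b; rewrite mxE split_l split_l.
  - by move=> a b; rewrite mxE split_r split_r.
  - by move=> a b; rewrite mxE split_l split_r.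
  - by move=> a b; rewrite mxE split_r split_l.
rewrite /discX eA eL.
rewrite mulrA [_ * 2]mulrC -mulrA -mulrBr; congr (2 * _).
rewrite mulr_sumr -sumrB; apply: eq_bigr => a _.
rewrite mulr_sumr -sumrB; apply: eq_bigr => b _; ring.
Qed.
End F.

Section H. Variable R : realType.
Variables (m n : nat) (M : 'M[bool]_(m, n)).

Lemma Bsum (P : {set 'I_m}) (Q : {set 'I_n}) : \sum_(a in P) \sum_(b in Q) ((M a b)%:R - density R M) = disc R M P Q.
Proof.
rewrite /disc.
have e : forall a, \sum_(b in Q) ((M a b)%:R - density R M) = \sum_(b in Q) ((M a b)%:R : R) - density R M * #|Q|%:R.
  by move=> a; rewrite sumrB sumr_const mulr_natr.
rewrite (eq_bigr _ (fun a _ => e a)) sumrB sumr_const -mulr_natr.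
by congr (_ - _); rewrite -mulr_natr; ring.
Qed.

Lemma quad_mx N (X : 'M[R]_N) (v : 'I_N -> R) :
  ((\col_i v i)^T *m X *m (\col_i v i)) 0 0 = \sum_i \sum_j v i * X i j * v j.
Proof.
rewrite mxE exchange_big /=; apply: eq_bigr => i _.
rewrite !mxE mulr_suml; apply: eq_bigr => j _.
by rewrite !mxE.
Qed.

Lemma upper D (HD : forall P Q, `| disc R M P Q | <= D) (X : 'M[R]_(m + n)) :
  psd X -> (forall i, X i i <= 1) -> discX M X <= 1024 * D.
Proof.
move=> [HT Hq] Hd.
have Xs : forall i j, X j i = X i j by move=> i j; rewrite -[in LHS]HT mxE.
rewrite discX_sym //.
set B := fun a b => ((M a b)%:R - density R M) : R.
have HB : forall (P : {set 'I_m}) (Q : {set 'I_n}), `| \sum_(a in P) \sum_(b in Q) B a b | <= D.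
  by move=> P Q; rewrite /B /= Bsum.
set N := (m + n)%N.
have vi : forall i : 'I_N, insub (nat_of_ord i) = Some i := fun i => valK i.
set Z := fun i j : nat => if (insub i : option 'I_N) is Some i' then
   (if (insub j : option 'I_N) is Some j' then X i' j' else 0) else 0.
have Zs : forall i j, Z i j = Z j i.
  move=> i j; rewrite /Z; case: (insub i) => [i'|]; case: (insub j) => [j'|] //.
have Zp : forall v, 0 <= qf R N Z v.
  move=> v; have := Hq (\col_i v i); rewrite quad_mx.
  suff -> : qf R N Z v = \sum_(i < N) \sum_(j < N) v i * X i j * v j by [].
  by apply: eq_bigr => i _; apply: eq_bigr => j _; rewrite /Z !vi.
have [z Hz] := gram R N Z Zs Zp.
have Xz : forall i j : 'I_N, X i j = \sum_(k < N) z i k * z j k.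
  by move=> i j; rewrite -Hz // /Z !vi.
have HS := groth R m n B D HB.
have : gval R m n B N (fun a k => z (lshift n a) k) (fun b k => z (rshift m b) k) <= sup (Sset R m n B).
  apply: sup_upper_bound; first exact: Sset_has_sup R m n B.
  exists N, (fun a k => z (lshift n a) k), (fun b k => z (rshift m b) k); split => //.
  split.
    move=> a; rewrite (eq_bigr (fun k : 'I_N => z (lshift n a) k * z (lshift n a) k)); last by move=> k _; rewrite expr2.
    by rewrite -Xz.
  move=> b; rewrite (eq_bigr (fun k : 'I_N => z (rshift m b) k * z (rshift m b) k)); last by move=> k _; rewrite expr2.
  by rewrite -Xz.
have -> : \sum_a \sum_b ((M a b)%:R - density R M) * X (lshift n a) (rshift m b)
   = gval R m n B N (fun a k => z (lshift n a) k) (fun b k => z (rshift m b) k).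
  by apply: eq_bigr => a _; apply: eq_bigr => b _; rewrite Xz.
move=> H1; apply: (le_trans (ler_wpM2l _ H1)) => //.
move: HS; set S := sup _; lra.
Qed.
End H.

Section L. Variable R : realType.
Variables (m n : nat) (M : 'M[bool]_(m, n)).

Lemma quad_gen N (X : 'M[R]_N) (x : 'cV[R]_N) :
  (x^T *m X *m x) 0 0 = \sum_i \sum_j x i 0 * X i j * x j 0.
Proof.
rewrite mxE exchange_big /=; apply: eq_bigr => i _.
rewrite !mxE mulr_suml; apply: eq_bigr => j _.
by rewrite !mxE.
Qed.

Definition indv (P : {set 'I_m}) (Q : {set 'I_n}) (i : 'I_(m + n)) : R :=
  match split i with inl a => (a \in P)%:R | inr b => (b \in Q)%:R end.
Definition X0 P Q : 'M[R]_(m + n) := \matrix_(i, j) (indv P Q i * indv P Q j).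

Lemma X0_feas P Q : psd (X0 P Q) /\ (forall i, X0 P Q i i <= 1).
Proof.
split; last first.
  move=> i; rewrite mxE /indv; case: (split i) => [a|b].
    by case: (a \in P); rewrite ?mulr1 ?mulr0.
  by case: (b \in Q); rewrite ?mulr1 ?mulr0.
split; first by apply/matrixP => i j; rewrite !mxE mulrC.
move=> x; rewrite quad_gen.
have -> : \sum_i \sum_j x i 0 * X0 P Q i j * x j 0 = (\sum_i x i 0 * indv P Q i) ^+ 2.
  rewrite expr2 mulr_suml; apply: eq_bigr => i _; rewrite mulr_sumr; apply: eq_bigr => j _.
  rewrite mxE; ring.
exact: sqr_ge0.
Qed.

Lemma X0_disc P Q : discX M (X0 P Q) = 2 * disc R M P Q.
Proof.
rewrite discX_sym; last by apply/matrixP => i j; rewrite !mxE mulrC.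
rewrite -Bsum; congr (2 * _).
rewrite [RHS]big_mkcond; apply: eq_bigr => a _.
under eq_bigr do rewrite mxE /indv split_l split_r.
case: (a \in P) => /=.
  rewrite [RHS]big_mkcond /=; apply: eq_bigr => b _.
  by case: (b \in Q); rewrite /= ?mulr1 ?mulr0 ?mul1r.
by rewrite big1 // => b _; rewrite mul0r mulr0.
Qed.

Lemma pdisc_le D (HD : forall P Q, `| disc R M P Q | <= D) : pdisc R M <= 1024 * D.
Proof.
apply: ge_sup.
  exists (discX M (X0 finset.set0 finset.set0)); exists (X0 finset.set0 finset.set0) => //; exact: X0_feas.
move=> y [X [HX HXd] <-]; exact: upper.
Qed.

Lemma pdisc_ge P Q : 2 * disc R M P Q <= pdisc R M.
Proof.
rewrite -X0_disc; apply: sup_upper_bound; last by exists (X0 P Q) => //; exact: X0_feas.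
split.
  exists (discX M (X0 finset.set0 finset.set0)); exists (X0 finset.set0 finset.set0) => //; exact: X0_feas.
exists (1024 * (3 * discp R M)) => y [X [HX HXd] <-]; apply: upper => // P' Q'.
exact: abs_disc_p.
Qed.
End L.



Theorem claim2p6 (R : realType) :
  exists c1 c2 : R, 0 < c1 /\ 0 < c2 /\
    forall (m n : nat) (M : 'M[bool]_(m, n)),
      (c1 * discp R M <= pdisc R M /\ pdisc R M <= c2 * discp R M) /\
      (c1 * discm R M <= pdisc R M /\ pdisc R M <= c2 * discm R M).
Proof.
exists (1/2), 3072; split; first lra; split; first lra.
move=> m n M.
have hp := pdisc_le R m n M _ (abs_disc_p R m n M).
have hm := pdisc_le R m n M _ (abs_disc_m R m n M).
have d0 : disc R M finset.set0 finset.set0 = 0.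
  by rewrite /disc big_set0 !cards0 !mulr0 subr0.
have p0 : 0 <= pdisc R M by have := pdisc_ge R m n M finset.set0 finset.set0; rewrite d0; lra.
have hdp : discp R M <= pdisc R M / 2.
  rewrite /discp; apply: bigmax_le => [|P _]; first lra.
  apply: bigmax_le => [|Q _]; first lra.
  have := pdisc_ge R m n M P Q; lra.
have hdm : discm R M <= 3 * (pdisc R M / 2).
  rewrite /discm; apply: bigmax_le => [|P _]; first lra.
  apply: bigmax_le => [|Q _]; first lra.
  have := abs_disc_p R m n M P Q; rewrite ler_norml => /andP[h1 h2].
  have := discp_ge0 R m n M; lra.
have := discp_ge0 R m n M; have := discm_ge0 R m n M.
lra.
Qed.
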